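(* Let $G_1$ and $G_2$ be non-empty graphs and $u\in V(G_1)$. Then $\mathrm{tww}(G_1(u\leftarrow G_2))=\max(\mathrm{tww}(G_1),\mathrm{tww}(G_2))$.
   Context: $G_1(u\leftarrow G_2)$ denotes the graph obtained from the disjoint union of $G_1-u$ and $G_2$ by making every vertex of $V(G_1)\setminus\{u\}$ that was adjacent to $u$ in $G_1$ adjacent to all vertices of $V(G_2)$. A trigraph $H$ consists of a vertex set $V(H)$ and two disjoint sets of unordered pairs of distinct vertices: black edges $E(H)$ and red edges $R(H)$. Two vertices are adjacent (neighbors) if they are joined by a black or a red edge. The red graph of $H$ is the graph $(V(H),R(H))$; $H$ is a $d$-trigraph if its red graph has maximum degree at most $d$. A graph is a trigraph with no red edges. Contracting two distinct vertices $u,v$ of a trigraph $H$ yields the trigraph obtained by deleting $u$ and $v$ and adding a new vertex $z$ such that, for every other vertex $x$: $zx$ is a black edge if both $ux$ and $vx$ are black edges; $zx$ is not an edge if $x$ is adjacent to neither $u$ nor $v$; and $zx$ is a red edge otherwise. All edges not incident to $u$ or $v$ are unchanged. A $d$-sequence of an $n$-vertex graph $G$ is a sequence of $d$-trigraphs $G=G_n,G_{n-1},\dots,G_1$ such that $G_1$ has a single vertex and each $G_{i-1}$ is obtained from $G_i$ by one contraction (so $G_i$ has $i$ vertices). The twin-width $\mathrm{tww}(G)$ of $G$ is the minimum $d$ such that $G$ admits a $d$-sequence. *)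

(* Defs.v *)
From Stdlib Require Import ClassicalEpsilon.
From mathcomp Require Import all_boot.
Set Implicit Arguments. Unset Strict Implicit. Unset Printing Implicit Defensive.

Record graph := Graph {
  gV : finType;
  gadj : rel gV;
  gsym : symmetric gadj;
  girr : irreflexive gadj }.

Section Subst.
Variables (G1 G2 : graph) (u : gV G1).

Definition subst_vert : finType := ({x : gV G1 | x != u} + gV G2)%type.

Definition subst_adj : rel subst_vert := fun a b =>
  match a, b with
  | inl x, inl y => gadj (val x) (val y)
  | inr x, inr y => gadj x y
  | inl x, inr _ => gadj (val x) u
  | inr _, inl y => gadj u (val y)
  end.

Lemma subst_sym : symmetric subst_adj.
Proof. by case=> x [] y //=; rewrite gsym. Qed.

Lemma subst_irr : irreflexive subst_adj.
Proof. by case=> x /=; rewrite girr. Qed.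

Definition subst_graph : graph := Graph subst_sym subst_irr.
End Subst.

(* A trigraph whose vertices are a finite set of names from a universe T;
   black / red edges are symmetric boolean relations (only their values on
   pairs of vertices of tverts matter). *)
Record trigraph (T : finType) := Trigraph {
  tverts : {set T};
  tblack : T -> T -> bool;
  tred : T -> T -> bool }.

Section Trigraphs.
Variable T : finType.
Implicit Types (H : trigraph T).

Definition tadj H x y := tblack H x y || tred H x y.

Definition red_deg H x : nat := #|[set y in tverts H | tred H x y]|.

Definition is_d_trigraph (d : nat) H : Prop :=
  forall x, x \in tverts H -> red_deg H x <= d.

(* Contraction of u and v in H, the new vertex being named z
   (z must not be one of the remaining vertices V(H) \ {u,v}). *)
Definition contract H (u v z : T) : trigraph T :=
  let W := tverts H :\ u :\ v in
  Trigraph (z |: W)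
    (fun x y =>
       if x == z then (y \in W) && tblack H u y && tblack H v y
       else if y == z then (x \in W) && tblack H u x && tblack H v x
       else (x \in W) && (y \in W) && tblack H x y)
    (fun x y =>
       if x == z then (y \in W) && (tadj H u y || tadj H v y)
                       && ~~ (tblack H u y && tblack H v y)
       else if y == z then (x \in W) && (tadj H u x || tadj H v x)
                       && ~~ (tblack H u x && tblack H v x)
       else (x \in W) && (y \in W) && tred H x y).

(* [contraction_seq d H s]: starting from H (assumed to be a d-trigraph),
   performing the contractions listed in s (triples (u, v, z): contract the
   distinct vertices u, v into a new vertex z) yields only d-trigraphs and
   ends with a single-vertex trigraph. *)
Fixpoint contraction_seq (d : nat) H (s : seq (T * T * T)) : Prop :=
  match s with
  | [::] => #|tverts H| = 1
  | (u, v, z) :: s' =>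
      [/\ u \in tverts H, v \in tverts H, u != v,
          z \notin tverts H :\ u :\ v
        & is_d_trigraph d (contract H u v z) /\
          contraction_seq d (contract H u v z) s']
  end.
End Trigraphs.

Definition graph_trigraph (G : graph) : trigraph (gV G) :=
  Trigraph [set: gV G] (gadj (g:=G)) (fun _ _ => false).

Definition has_dseq (G : graph) (d : nat) : Prop :=
  is_d_trigraph d (graph_trigraph G) /\
  exists s, contraction_seq d (graph_trigraph G) s.

Definition has_dseqb (G : graph) (d : nat) : bool :=
  if excluded_middle_informative (has_dseq G d) then true else false.

Lemma has_dseqb_ex (G : graph) :
  (exists d, has_dseq G d) -> exists d, has_dseqb G d.
Proof.
case=> d Hd; exists d; rewrite /has_dseqb.
by case: excluded_middle_informative.
Qed.

(* Twin-width: the minimum d such that G admits a d-sequence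
   (every non-empty graph admits one; default 0 otherwise). *)
Definition tww (G : graph) : nat :=
  match excluded_middle_informative (exists d, has_dseq G d) with
  | left H => ex_minn (has_dseqb_ex H)
  | right _ => 0
  end.

(* Main.v *)
Require Import Defs.
From Stdlib Require Import ClassicalEpsilon.
From mathcomp Require Import all_boot.
Set Implicit Arguments. Unset Strict Implicit. Unset Printing Implicit Defensive.

Section Adj.
Variable G : graph.
Local Notation V := (gV G).
Implicit Types A B C : {set V}.

Definition allA A B := [forall a, forall b, (a \in A) ==> (b \in B) ==> gadj a b].
Definition anyA A B := [exists a, exists b, [&& a \in A, b \in B & gadj a b]].
Definition mixed A B := anyA A B && ~~ allA A B.

Lemma allAP A B : reflect (forall a b, a \in A -> b \in B -> gadj a b) (allA A B).
Proof.
apply: (iffP forallP) => [h a b ha hb|h a].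
  by have /forallP/(_ b) := h a; rewrite ha hb.
by apply/forallP => b; apply/implyP => ha; apply/implyP => hb; apply: h.
Qed.

Lemma anyAP A B : reflect (exists a b, [/\ a \in A, b \in B & gadj a b]) (anyA A B).
Proof.
apply: (iffP existsP) => [[a /existsP [b /and3P [h1 h2 h3]]]|[a [b [h1 h2 h3]]]].
  by exists a, b.
by exists a; apply/existsP; exists b; rewrite h1 h2 h3.
Qed.

Lemma allAC A B : allA A B = allA B A.
Proof.
by apply/allAP/allAP => h a b ha hb; rewrite gsym; apply: h.
Qed.

Lemma anyAC A B : anyA A B = anyA B A.
Proof.
by apply/anyAP/anyAP => -[a [b [h1 h2 h3]]]; exists b, a; rewrite gsym.
Qed.

Lemma mixedC A B : mixed A B = mixed B A.
Proof. by rewrite /mixed allAC anyAC. Qed.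

Lemma allAU A B C : allA (A :|: B) C = allA A C && allA B C.
Proof.
apply/allAP/andP => [h|[/allAP h1 /allAP h2] a b].
  by split; apply/allAP => a b ha hb; apply: h => //; rewrite inE ha ?orbT.
by rewrite inE => /orP [] ha hb; [apply: h1|apply: h2].
Qed.

Lemma anyAU A B C : anyA (A :|: B) C = anyA A C || anyA B C.
Proof.
apply/anyAP/orP => [[a [b [h1 h2 h3]]]|[] /anyAP [a [b [h1 h2 h3]]]].
  by move: h1; rewrite inE => /orP [] h1; [left|right]; apply/anyAP; exists a, b.
  by exists a, b; rewrite inE h1.
by exists a, b; rewrite inE h1 orbT.
Qed.

Lemma allA_any A B : A != set0 -> B != set0 -> allA A B -> anyA A B.
Proof.
case/set0Pn => a ha /set0Pn [b hb] /allAP h; apply/anyAP; exists a, b; split => //.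
exact: h.
Qed.

Lemma allA1 a b : allA [set a] [set b] = gadj a b.
Proof.
apply/allAP/idP => [h|h x y]; first by apply: h; rewrite inE.
by rewrite !inE => /eqP -> /eqP ->.
Qed.

Lemma mixed1 a b : mixed [set a] [set b] = false.
Proof.
rewrite /mixed allA1; apply/negbTE; apply/nandP.
case: (boolP (gadj a b)) => h; [by right|left].
by apply/anyAP => [[x [y []]]]; rewrite !inE => /eqP -> /eqP ->; rewrite (negbTE h).
Qed.

End Adj.

Lemma disjUl (T : finType) (A B C : {set T}) :
  [disjoint A & C] -> [disjoint B & C] -> [disjoint A :|: B & C].
Proof. by rewrite -!setI_eq0 setIUl setU_eq0 => -> ->. Qed.

Lemma disjUr (T : finType) (A B C : {set T}) :
  [disjoint C & A] -> [disjoint C & B] -> [disjoint C & A :|: B].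
Proof. by rewrite -!setI_eq0 setIUr setU_eq0 => -> ->. Qed.

Section Good.
Variables (G : graph) (T : finType).
Local Notation V := (gV G).

Definition good (H : trigraph T) (p : T -> {set V}) : Prop :=
  [/\ forall x, x \in tverts H -> p x != set0,
      forall x y, x \in tverts H -> y \in tverts H -> x != y -> [disjoint p x & p y],
      forall v, exists2 x, x \in tverts H & v \in p x,
      forall x y, x \in tverts H -> y \in tverts H -> x != y ->
        tblack H x y = allA (p x) (p y) /\ tred H x y = mixed (p x) (p y)
    & forall x, tred H x x = false].

Definition upd (p : T -> {set V}) z := fun x => if x == z then p x else p x.

Lemma tadj_good H p x y : good H p -> x \in tverts H -> y \in tverts H -> x != y ->
  tadj H x y = anyA (p x) (p y).
Proof.
case=> hne _ _ hbr _ hx hy xy; rewrite /tadj; have [-> ->] := hbr _ _ hx hy xy.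
rewrite /mixed; case h: (allA _ _) => /=; last by rewrite andbT.
by rewrite (allA_any (hne _ hx) (hne _ hy) h).
Qed.

Lemma contract_good H p u v z :
  good H p -> u \in tverts H -> v \in tverts H -> u != v ->
  z \notin tverts H :\ u :\ v ->
  good (contract H u v z) (fun x => if x == z then p u :|: p v else p x).
Proof.
move=> hg; have [hne hdis hcov hbr hself] := hg => hu hv uv hz.
set W := tverts H :\ u :\ v.
have hW x : x \in W -> [/\ x \in tverts H, x != u & x != v].
  by rewrite !inE => /and3P [h1 h2 h3].
have hWz x : x \in W -> x != z by move=> hx; apply: contraNneq hz => <-.
split => /=.
- move=> x; rewrite in_setU1; case: eqP => [_ _|_ /= /hW [hx _ _]]; last exact: hne.
  by have /set0Pn [a ha] := hne _ hu; apply/set0Pn; exists a; rewrite inE ha.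
- move=> x y; rewrite !in_setU1.
  case: (eqP (x:=x)) => [->|xz] /=; case: (eqP (x:=y)) => [->|yz] //=;
    try by move=> _ _; rewrite eqxx.
  + move=> _ /hW [hy yu yv] _; apply: disjUl; apply: hdis => //; by rewrite eq_sym.
  + move=> /hW [hx xu xv] _ _; apply: disjUr; exact: hdis.
  + by move=> /hW [hx _ _] /hW [hy _ _]; apply: hdis.
- move=> w; have [x hx hwx] := hcov w.
  case: (boolP (x \in W)) => xW.
    by exists x; [rewrite in_setU1 xW orbT|rewrite (negbTE (hWz _ xW))].
  exists z; first by rewrite in_setU1 eqxx.
  rewrite eqxx; move: xW; rewrite !inE hx andbT negb_and !negbK.
  by case/orP => /eqP <-; rewrite hwx ?orbT.
- move=> x y; rewrite !in_setU1.
  case: (eqP (x:=x)) => [->|xz] /=; case: (eqP (x:=y)) => [->|yz] //=;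
    try by move=> _ _; rewrite eqxx.
  + move=> _ yW _; have [hy yu yv] := hW _ yW; rewrite yW /=.
    have uy : u != y by rewrite eq_sym.
    have vy : v != y by rewrite eq_sym.
    rewrite (tadj_good hg hu hy uy) (tadj_good hg hv hy vy).
    have [-> _] := hbr _ _ hu hy uy; have [-> _] := hbr _ _ hv hy vy.
    by rewrite /mixed allAU anyAU.
  + move=> xW _ _; have [hx xu xv] := hW _ xW; rewrite xW /=.
    have ux : u != x by rewrite eq_sym.
    have vx : v != x by rewrite eq_sym.
    rewrite (tadj_good hg hu hx ux) (tadj_good hg hv hx vx).
    have [-> _] := hbr _ _ hu hx ux; have [-> _] := hbr _ _ hv hx vx.
    by rewrite /mixed (allAC (p x)) (anyAC (p x)) allAU anyAU.
  + by move=> xW yW xy; rewrite xW yW /=; apply: hbr => //; [case: (hW _ xW)|case: (hW _ yW)].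
- move=> x; case: eqP => [->|_]; first by rewrite (negbTE hz).
  by rewrite hself !andbF.
Qed.

End Good.
Lemma graph_good (G : graph) : good (graph_trigraph G) (fun x => [set x]).
Proof.
split => //=.
- by move=> x _; apply/set0Pn; exists x; rewrite inE.
- by move=> x y _ _ xy; rewrite disjoints1 inE.
- by move=> v; exists v; rewrite ?inE.
- by move=> x y _ _ _; rewrite allA1 mixed1.
Qed.

Lemma graph_dtri (G : graph) d : is_d_trigraph d (graph_trigraph G).
Proof.
move=> x _; rewrite /red_deg /=.
suff -> : [set y in [set: gV G] | false] = set0 by rewrite cards0.
by apply/setP => y; rewrite !inE andbF.
Qed.

Section Restrict.
Variables (G G' : graph) (f : gV G' -> gV G).
Hypothesis hf : forall a b, gadj (f a) (f b) = gadj a b.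
Variables (T T' : finType).

Definition Rel (H : trigraph T) p (H' : trigraph T') p' (g : T' -> T) :=
  [/\ @good G T H p, @good G' T' H' p' &
      forall x, x \in tverts H' -> g x \in tverts H /\ p' x = f @^-1: p (g x)].

Lemma mixed_pre (P Q : {set gV G}) : mixed (f @^-1: P) (f @^-1: Q) -> mixed P Q.
Proof.
case/andP => /anyAP [a [b [ha hb hab]]] /allAP nall; apply/andP; split.
  rewrite inE in ha; rewrite inE in hb.
  by apply/anyAP; exists (f a), (f b); split; rewrite ?hf.
apply/allAP => hall; apply: nall => x y hx hy; rewrite -hf; apply: hall.
  by move: hx; rewrite inE.
by move: hy; rewrite inE.
Qed.

Section RelFacts.
Variables (H : trigraph T) (p : T -> {set gV G}) (H' : trigraph T') (p' : T' -> {set gV G'}) (g : T' -> T).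
Hypothesis hR : Rel H p H' p' g.

Lemma rel_inj : {in tverts H' &, injective g}.
Proof.
case: (hR) => hg [hne hdis _ _ _] hm x y hx hy gxy; apply/eqP; apply/negPn/negP => xy.
have := hdis _ _ hx hy xy; rewrite (proj2 (hm _ hx)) gxy -(proj2 (hm _ hy)).
by rewrite -setI_eq0 setIid => /eqP e; move: (hne _ hy); rewrite e eqxx.
Qed.

Lemma rel_red x : x \in tverts H' -> red_deg H' x <= red_deg H (g x).
Proof.
move=> hx; case: (hR) => [[_ _ _ hbr hself] [_ _ _ hbr' hself'] hm].
rewrite /red_deg -(card_in_imset (f:=g)); last first.
  by move=> a b; rewrite !inE => /andP [ha _] /andP [hb _]; apply: rel_inj.
apply: subset_leq_card; apply/subsetP => z /imsetP [y hy' ->].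
move: hy'; rewrite inE => /andP [hy hxy].
have xy : x != y by apply: contraTneq hxy => ->; rewrite hself'.
have gxy : g x != g y by apply: contra xy => /eqP /rel_inj; move=> /(_ hx hy) ->.
rewrite inE (proj1 (hm _ hy)) /=.
have [_ ->] := hbr _ _ (proj1 (hm _ hx)) (proj1 (hm _ hy)) gxy.
have [_ hr] := hbr' _ _ hx hy xy; apply: mixed_pre.
by rewrite -(proj2 (hm _ hx)) -(proj2 (hm _ hy)) -hr.
Qed.

Lemma rel_dtri d : is_d_trigraph d H -> is_d_trigraph d H'.
Proof.
move=> hd x hx; apply: leq_trans (rel_red hx) _; apply: hd.
by case: (hR) => _ _ /(_ _ hx) [].
Qed.

Lemma rel_surj y : y \in tverts H -> f @^-1: p y != set0 ->
  exists2 x, x \in tverts H' & g x = y.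
Proof.
case: (hR) => [[_ hdis _ _ _] [_ _ hcov _ _] hm] hy /set0Pn [w hw].
have [x hx hwx] := hcov w; exists x => //.
have [hgx hpx] := hm _ hx; apply/eqP; apply/negPn/negP => gy.
have := hdis _ _ hgx hy gy; rewrite -setI_eq0; apply/negP/set0Pn; exists (f w).
by rewrite inE; apply/andP; split; [move: hwx; rewrite hpx inE|move: hw; rewrite inE].
Qed.

End RelFacts.

Lemma restrict_seq d (w0 : gV G') : forall s H p H' p' g,
  Rel H p H' p' g -> is_d_trigraph d H -> contraction_seq d H s ->
  exists s', contraction_seq d H' s'.
Proof.
elim=> [|[[a b] c] s IH] H p H' p' g hR hd /=.
  move=> h1; exists [::] => /=; apply/eqP; rewrite eqn_leq; apply/andP; split.
    rewrite -h1 -(card_in_imset (rel_inj hR)); apply: subset_leq_card.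
    by apply/subsetP => _ /imsetP [x hx ->]; case: (hR) => _ _ /(_ _ hx) [].
  case: (hR) => _ [_ _ hcov _ _] _; have [x hx _] := hcov w0.
  by rewrite card_gt0; apply/set0Pn; exists x.
case=> ha hb ab hc [hd1 hs].
set H1 := contract H a b c.
set p1 := fun x => if x == c then p a :|: p b else p x.
have hg1 : good H1 p1 by apply: contract_good => //; case: hR.
set g1 := fun x => if (g x == a) || (g x == b) then c else g x.
have hWv y : y \in tverts H :\ a :\ b -> y \in tverts H1.
  by move=> hy; rewrite /H1 /= in_setU1 hy orbT.
have hWc y : y \in tverts H :\ a :\ b -> y != c.
  by move=> hy; apply: contraNneq hc => <-.
have hcin : c \in tverts H1 by rewrite /H1 /= in_setU1 eqxx.
case: (boolP ((f @^-1: p a != set0) && (f @^-1: p b != set0))).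
  case/andP => /(rel_surj hR ha) [a' ha' ga'] /(rel_surj hR hb) [b' hb' gb'].
  have a'b' : a' != b' by apply: contra ab => /eqP e; rewrite -ga' -gb' e.
  set H1' := contract H' a' b' a'.
  set p1' := fun x => if x == a' then p' a' :|: p' b' else p' x.
  have hg1' : good H1' p1'.
    by apply: contract_good => //; [case: hR|rewrite !inE eqxx andbF].
  have hR1 : Rel H1 p1 H1' p1' g1.
    split => // x; rewrite /H1' /= in_setU1 => /orP [/eqP ->|hx].
      rewrite /g1 /p1' eqxx ga' eqxx /= /p1 eqxx; split => //.
      have [_ e1] := (match hR with And3 _ _ h => h a' ha' end).
      have [_ e2] := (match hR with And3 _ _ h => h b' hb' end).
      by rewrite e1 e2 ga' gb' preimsetU.
    move: (hx); rewrite !inE => /and3P [xb' xa' hx'].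
    have [hgx ex] := (match hR with And3 _ _ h => h x hx' end).
    have gxa : g x != a by rewrite -ga'; apply: contra xa' => /eqP /(rel_inj hR hx' ha') ->.
    have gxb : g x != b by rewrite -gb'; apply: contra xb' => /eqP /(rel_inj hR hx' hb') ->.
    have gW : g x \in tverts H :\ a :\ b by rewrite !inE gxa gxb hgx.
    rewrite /g1 (negbTE gxa) (negbTE gxb) /p1' (negbTE xa') /p1 (negbTE (hWc _ gW)).
    by split => //=; rewrite gxa gxb hgx.
  have [s' hs'] := IH _ _ _ _ _ hR1 hd1 hs.
  exists ((a', b', a') :: s') => /=; split => //.
    by rewrite !inE eqxx andbF.
  by split => //; apply: (rel_dtri hR1).
rewrite negb_and !negbK => hab.
have hR1 : Rel H1 p1 H' p' g1.
  split => //; first by case: hR.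
  move=> x hx; have [hgx ex] := (match hR with And3 _ _ h => h x hx end).
  rewrite /g1; case: (boolP ((g x == a) || (g x == b))) => hgab.
    rewrite /p1 eqxx preimsetU ex; split => //.
    have hne : f @^-1: p (g x) != set0.
      by rewrite -ex; case: (hR) => _ [hne _ _ _ _] _; apply: hne.
    case/orP: hgab => /eqP e; rewrite e in hne; case/orP: hab => /eqP h0;
      rewrite ?h0 ?setU0 ?set0U ?e //; by rewrite h0 eqxx in hne.
  move: hgab; rewrite negb_or => /andP [gxa gxb].
  have gW : g x \in tverts H :\ a :\ b by rewrite !inE gxa gxb hgx.
  by rewrite /p1 (negbTE (hWc _ gW)); split => //; apply: hWv.
exact: IH _ _ _ _ _ hR1 hd1 hs.
Qed.

End Restrict.

Lemma restrict_dseq (G G' : graph) (f : gV G' -> gV G)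
  (hf : forall a b, gadj (f a) (f b) = gadj a b) (finj : injective f)
  d (w0 : gV G') : has_dseq G d -> has_dseq G' d.
Proof.
case=> hd [s hs]; split; first exact: graph_dtri.
apply: (@restrict_seq G G' f hf _ _ d w0 s (graph_trigraph G) (fun x => [set x]) (graph_trigraph G') (fun x => [set x]) f) => //.
split; try exact: graph_good.
move=> x _; split => //; apply/setP => y; rewrite !inE.
by apply/eqP/eqP => [->|/finj].
Qed.

Section Embed.
Variables (G Gs : graph) (T Ts : finType) (rho : T -> Ts).
Hypothesis rinj : injective rho.
Variables (sigma : gV G -> {set gV Gs}) (E : {set Ts}) (qE : Ts -> {set gV Gs}).
Hypothesis hrE : forall x, rho x \notin E.
Hypothesis hsig : forall a b, a != b -> forall s t, s \in sigma a -> t \in sigma b ->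
  gadj s t = gadj a b.
Hypothesis hEh : forall e, e \in E -> forall s s' v v' t t',
  s \in qE e -> s' \in qE e -> t \in sigma v -> t' \in sigma v' -> gadj s t = gadj s' t'.
Hypothesis hEE : forall e e', e \in E -> e' \in E -> e != e' -> ~~ mixed (qE e) (qE e').

Definition U (P : {set gV G}) := \bigcup_(v in P) sigma v.

Lemma mixedU (P Q : {set gV G}) : [disjoint P & Q] -> mixed (U P) (U Q) -> mixed P Q.
Proof.
move=> hPQ /andP [/anyAP [s [t [/bigcupP [a ha hs] /bigcupP [b hb ht] hst]]] hna].
have ab : a != b by apply: contraTneq hb => <-; rewrite (disjointFr hPQ ha).
apply/andP; split; first by apply/anyAP; exists a, b; rewrite -(hsig ab hs ht).
apply: contra hna => /allAP hall; apply/allAP => s' t' /bigcupP [a' ha' hs'] /bigcupP [b' hb' ht'].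
have a'b' : a' != b' by apply: contraTneq hb' => <-; rewrite (disjointFr hPQ ha').
by rewrite (hsig a'b' hs' ht'); apply: hall.
Qed.

Lemma mixedE e (P : {set gV G}) : e \in E -> mixed (qE e) (U P) = false.
Proof.
move=> he; apply/negbTE/negP => /andP [/anyAP [s [t [hs /bigcupP [v _ ht] hst]]] hna].
move/negP: hna; apply; apply/allAP => s' t' hs' /bigcupP [v' _ ht'].
by rewrite -(hEh he hs hs' ht ht').
Qed.

Definition ERel (H : trigraph T) (p : T -> {set gV G}) (K : trigraph Ts) (q : Ts -> {set gV Gs}) :=
  [/\ good H p, good K q, tverts K = rho @: tverts H :|: E,
      {in tverts H, forall x, q (rho x) = U (p x)} & {in E, forall e, q e = qE e}].

Section ERelFacts.
Variables (H : trigraph T) (p : T -> {set gV G}) (K : trigraph Ts) (q : Ts -> {set gV Gs}).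
Hypothesis hR : ERel H p K q.

Lemma erel_red x : x \in tverts H -> red_deg K (rho x) <= red_deg H x.
Proof.
move=> hx; case: (hR) => [[_ hdis _ hbr hself] [_ _ _ hbrK hselfK] hK hq hqE].
rewrite /red_deg -(card_imset _ rinj); apply: subset_leq_card.
apply/subsetP => t; rewrite inE => /andP [ht hrt].
have xt : rho x != t by apply: contraTneq hrt => <-; rewrite hselfK.
have hrx : rho x \in tverts K by rewrite hK inE imset_f.
move: (ht); rewrite hK inE => /orP [/imsetP [y hy ety]|tE].
  subst t; have xy : x != y by apply: contra xt => /eqP ->.
  apply: imset_f; rewrite inE hy /=.
  have [_ ->] := hbr _ _ hx hy xy.
  apply: mixedU; first exact: hdis.
  by rewrite -(hq _ hx) -(hq _ hy); have [_ <-] := hbrK _ _ hrx ht xt.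
have [_ e] := hbrK _ _ hrx ht xt.
by move: hrt; rewrite e (hq _ hx) (hqE _ tE) mixedC mixedE.
Qed.

Lemma erel_redE e : e \in E -> red_deg K e = 0.
Proof.
move=> he; case: (hR) => [[_ _ _ _ _] [_ _ _ hbrK hselfK] hK hq hqE].
have heK : e \in tverts K by rewrite hK inE he orbT.
apply/eqP; rewrite cards_eq0; apply/eqP/setP => t; rewrite !inE.
apply/negbTE/negP => /andP [ht hrt].
have et : e != t by apply: contraTneq hrt => <-; rewrite hselfK.
have [_ e1] := hbrK _ _ heK ht et.
move: hrt; rewrite e1 (hqE _ he).
move: (ht); rewrite hK inE => /orP [/imsetP [y hy ety]|tE].
  by subst t; rewrite (hq _ hy) mixedE.
by rewrite (hqE _ tE); apply/negP: (hEE he tE et).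
Qed.

Lemma erel_dtri d : is_d_trigraph d H -> is_d_trigraph d K.
Proof.
move=> hd t; case: (hR) => _ _ hK _ _; rewrite hK inE => /orP [/imsetP [y hy ->]|tE].
  exact: leq_trans (erel_red hy) (hd _ hy).
by rewrite erel_redE.
Qed.

End ERelFacts.

Lemma imsetD1_inj (A : {set T}) a : rho @: (A :\ a) = rho @: A :\ rho a.
Proof.
apply/setP => t; rewrite [in RHS]in_setD1; apply/idP/idP.
  case/imsetP => x hx ->; move: hx; rewrite in_setD1 => /andP [xa hx].
  by rewrite (inj_eq rinj) xa imset_f.
case/andP => ta /imsetP [x hx ex]; subst t; apply: imset_f.
by rewrite in_setD1 hx andbT; apply: contra ta => /eqP ->.
Qed.

Lemma erel_step H p K q a b c :
  ERel H p K q -> a \in tverts H -> b \in tverts H -> a != b ->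
  c \notin tverts H :\ a :\ b ->
  ERel (contract H a b c) (fun x => if x == c then p a :|: p b else p x)
       (contract K (rho a) (rho b) (rho c))
       (fun x => if x == rho c then q (rho a) :|: q (rho b) else q x).
Proof.
move=> hR ha hb ab hc; case: (hR) => hg hgK hK hq hqE.
have hWc y : y \in tverts H :\ a :\ b -> y != c.
  by move=> hy; apply: contraNneq hc => <-.
have hra : rho a \in tverts K by rewrite hK inE imset_f.
have hrb : rho b \in tverts K by rewrite hK inE imset_f.
split.
- exact: contract_good.
- apply: contract_good => //; first by rewrite (inj_eq rinj).
  rewrite hK !inE negb_and !negbK (inj_eq rinj) (inj_eq rinj).
  rewrite (mem_imset _ _ rinj) (negbTE (hrE c)) orbF.
  by move: hc; rewrite !inE !negb_and !negbK.
- rewrite /= imsetU1 !imsetD1_inj hK; apply/setP => t.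
  rewrite !inE; case: (boolP (t \in E)) => tE; last by rewrite !orbF.
  have tc : t != rho c by apply: contraNneq (hrE c) => <-.
  have ta : t != rho a by apply: contraNneq (hrE a) => <-.
  have tb : t != rho b by apply: contraNneq (hrE b) => <-.
  by rewrite ta tb !orbT.
- move=> x; rewrite /= in_setU1 => /orP [/eqP ->|hx].
    rewrite !eqxx (hq _ ha) (hq _ hb); exact: (esym (bigcup_setU _ _ _)).
  rewrite (inj_eq rinj) !(negbTE (hWc _ hx)); apply: hq.
  by move: hx; rewrite !inE => /and3P [].
- move=> e he; have -> : (e == rho c) = false.
    by apply/negbTE; apply: contraNneq (hrE c) => <-.
  exact: hqE.
Qed.

Lemma embed d (Cont : forall w K q, good K q -> tverts K = rho w |: E ->
    q (rho w) = U setT -> {in E, forall e, q e = qE e} ->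
    exists s', contraction_seq d K s') :
  forall s H p K q, ERel H p K q -> contraction_seq d H s ->
  exists s', contraction_seq d K s'.
Proof.
elim=> [|[[a b] c] s IH] H p K q hR /=.
  move/eqP/cards1P => [w hw]; case: (hR) => [[_ _ hcov _ _] hgK hK hq hqE].
  apply: (Cont w K q) => //; first by rewrite hK hw imset_set1.
  rewrite hq ?hw ?inE //; congr U; apply/setP => v; rewrite inE.
  by have [x] := hcov v; rewrite hw inE => /eqP ->.
case=> ha hb ab hc [hd1 hs].
have hR1 := erel_step hR ha hb ab hc.
have [s' hs'] := IH _ _ _ _ hR1 hs.
exists ((rho a, rho b, rho c) :: s') => /=; split => //.
- by case: (hR) => _ _ -> _ _; rewrite inE imset_f.
- by case: (hR) => _ _ -> _ _; rewrite inE imset_f.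
- by rewrite (inj_eq rinj).
- by case: (hR) => _ _ hK _ _;
    rewrite hK !inE negb_and !negbK (inj_eq rinj) (inj_eq rinj) (mem_imset _ _ rinj)
      (negbTE (hrE c)) orbF; move: hc; rewrite !inE !negb_and !negbK.
- by split => //; apply: (erel_dtri hR1).
Qed.

End Embed.

Lemma seq_mono (T : finType) d d' (H : trigraph T) s :
  d <= d' -> contraction_seq d H s -> contraction_seq d' H s.
Proof.
move=> dd'; elim: s H => [|[[a b] c] s IH] H //=.
case=> h1 h2 h3 h4 [h5 h6]; split => //; split; last exact: IH.
by move=> x hx; apply: leq_trans (h5 _ hx) dd'.
Qed.

Lemma dseq_mono G d d' : d <= d' -> has_dseq G d -> has_dseq G d'.
Proof.
move=> dd' [h1 [s hs]]; split; first exact: graph_dtri.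
by exists s; apply: seq_mono hs.
Qed.

Lemma exists_seq (T : finType) n : forall H : trigraph T, #|tverts H| = n.+1 ->
  exists s, contraction_seq #|T| H s.
Proof.
elim: n => [|n IH] H hn; first by exists [::].
have /card_gt0P [a ha] : 0 < #|tverts H| by rewrite hn.
have : 0 < #|tverts H :\ a| by move: hn; rewrite (cardsD1 a) ha add1n => [[->]].
case/card_gt0P => b; rewrite in_setD1 => /andP [ba hb].
have ab : a != b by rewrite eq_sym.
have hc : a \notin tverts H :\ a :\ b by rewrite !inE eqxx andbF.
have hcard : #|tverts (contract H a b a)| = n.+1.
  rewrite /= cardsU1 hc add1n; move: hn; rewrite (cardsD1 a) ha add1n => [[]].
  by rewrite (cardsD1 b) in_setD1 ba hb add1n => [[->]].
have [s hs] := IH _ hcard.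
exists ((a, b, a) :: s) => /=; split => //; split => // x _.
by rewrite /red_deg max_card.
Qed.

Lemma dseq_ex (G : graph) : 0 < #|gV G| -> exists d, has_dseq G d.
Proof.
move=> hG; exists #|gV G|; split; first exact: graph_dtri.
by apply: (exists_seq (n := #|gV G|.-1)); rewrite /= cardsT prednK.
Qed.

Lemma tww_spec G : (exists d, has_dseq G d) ->
  has_dseq G (tww G) /\ forall d, has_dseq G d -> tww G <= d.
Proof.
move=> hex; rewrite /tww; case: excluded_middle_informative => // h.
case: ex_minnP => m hm hmin; split.
  by move: hm; rewrite /has_dseqb; case: excluded_middle_informative.
move=> d hd; apply: hmin; rewrite /has_dseqb.
by case: excluded_middle_informative.
Qed.

Section Main.
Variables (G1 G2 : graph) (u : gV G1).
Local Notation S := (subst_graph G2 u).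
Local Notation VS := (gV S).

Definition phi (w : gV G2) (x : gV G1) : VS :=
  match (insub x : option {y : gV G1 | y != u}) with
  | Some y => inl y | None => inr w end.

Lemma phi_inj w : injective (phi w).
Proof.
move=> x y; rewrite /phi.
case: insubP => [x' hx ex|hx]; case: insubP => [y' hy ey|hy] //.
- by case=> e; rewrite -ex -ey e.
- by move: hx hy; rewrite !negbK => /eqP -> /eqP ->.
Qed.

Lemma phi_adj w x y : gadj (phi w x) (phi w y) = gadj x y.
Proof.
rewrite /phi; case: insubP => [x' hx <-|hx]; case: insubP => [y' hy <-|hy] //=.
- by move: hy; rewrite negbK => /eqP ->.
- by move: hx; rewrite negbK => /eqP ->.
- by move: hx hy; rewrite !negbK => /eqP -> /eqP ->; rewrite !girr.
Qed.

Definition sig1 (v : gV G2) : {set VS} := [set inr v].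
Definition E1 : {set VS} := [set t : VS | if t is inl _ then true else false].
Definition Om := U sig1 [set: gV G2].

Definition sig2 (x : gV G1) : {set VS} :=
  match (insub x : option {y : gV G1 | y != u}) with
  | Some y => [set inl y] | None => Om end.

Lemma phase2 d w (K : trigraph VS) q : has_dseq G1 d -> good K q ->
  tverts K = inr w |: E1 -> q (inr w) = Om -> {in E1, forall e, q e = [set e]} ->
  exists s', contraction_seq d K s'.
Proof.
move=> [_ [s hs]] hg hK hqw hqE.
have hrE : forall x, phi w x \notin (set0 : {set VS}) by move=> x; rewrite inE.
have hsig : forall a b, a != b -> forall s t, s \in sig2 a -> t \in sig2 b ->
    gadj s t = gadj a b.
  move=> a b ab s0 t; rewrite /sig2.
  case: insubP => [a' ha <-|ha]; case: insubP => [b' hb <-|hb].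
  - by rewrite !inE => /eqP -> /eqP ->.
  - by rewrite inE => /eqP -> /bigcupP [v _]; rewrite inE => /eqP ->; move: hb; rewrite negbK => /eqP ->.
  - by move=> /bigcupP [v _]; rewrite inE => /eqP -> ; rewrite inE => /eqP ->; move: ha; rewrite negbK => /eqP ->.
  - by move: ab ha hb; rewrite !negbK => /eqP ab /eqP e1 /eqP e2; case: ab; rewrite e1 e2.
have hEh : forall e, e \in (set0 : {set VS}) -> forall (s s' : VS) (v v' : gV G1) (t t' : VS),
    s \in set0 -> s' \in set0 -> t \in sig2 v -> t' \in sig2 v' -> gadj s t = gadj s' t'.
  by move=> e; rewrite inE.
have hEE : forall e e', e \in (set0 : {set VS}) -> e' \in set0 -> e != e' ->
    ~~ mixed (G:=S) set0 set0 by move=> e; rewrite inE.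
apply: (@embed G1 S _ _ (phi w) (@phi_inj w) sig2 set0 (fun _ => set0) hrE hsig hEh hEE d _
   s (graph_trigraph G1) (fun x => [set x]) K q) => //.
  by move=> w' K' q' _ hK' _ _; exists [::]; rewrite /= hK' setU0 cards1.
split => //; first exact: graph_good.
- rewrite setU0 hK; apply/setP => t; rewrite !inE; case: t => [x'|y] /=.
    apply/esym/imsetP; exists (val x') => //.
    by rewrite /phi valK.
  rewrite orbF; apply/eqP/imsetP => [[->]|[x _]]; first by exists u => //; rewrite /phi insubF ?eqxx.
  by rewrite /phi; case: insubP => // _ [->].
- move=> x _; rewrite /U big_set1 /phi /sig2; case: insubP => [y _ _|_ //].
  by rewrite hqE // inE.
- by move=> e; rewrite inE.
Qed.

Lemma phase1 d : has_dseq G1 d -> has_dseq G2 d -> has_dseq S d.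
Proof.
move=> h1 [_ [s hs]]; split; first exact: graph_dtri.
have rinj : injective (fun v : gV G2 => (inr v : VS)) by move=> a b [].
have hrE : forall x : gV G2, (inr x : VS) \notin E1 by move=> x; rewrite inE.
have hsig : forall a b, a != b -> forall s t, s \in sig1 a -> t \in sig1 b ->
    gadj s t = gadj a b.
  by move=> a b _ s0 t; rewrite /sig1 !inE => /eqP -> /eqP ->.
have hEh : forall e, e \in E1 -> forall (s s' : VS) (v v' : gV G2) (t t' : VS),
    s \in [set e] -> s' \in [set e] -> t \in sig1 v -> t' \in sig1 v' -> gadj s t = gadj s' t'.
  move=> e he s0 sp v vp t tp; rewrite /sig1 !inE => /eqP -> /eqP -> /eqP -> /eqP ->.
  by case: e he => [x|y]; rewrite /E1 inE.
have hEE : forall e e', e \in E1 -> e' \in E1 -> e != e' ->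
    ~~ mixed (G:=S) [set e] [set e'] by move=> e e' _ _ _; rewrite mixed1.
apply: (@embed G2 S _ _ _ rinj sig1 E1 (fun e => [set e]) hrE hsig hEh hEE d _
   s (graph_trigraph G2) (fun x => [set x]) (graph_trigraph S) (fun x => [set x])) => //.
  by move=> w K q hg hK hqw hqE; apply: (phase2 (w := w) h1 hg).
split => //; try exact: graph_good.
- apply/setP => t; rewrite !inE; case: t => [x'|y] /=; first by rewrite orbT.
  by rewrite orbF; apply/esym/imsetP; exists y.
- by move=> x _; rewrite /U big_set1.
Qed.

End Main.

Theorem mainTheorem17 (G1 G2 : graph) (u : gV G1) :
  0 < #|gV G2| ->
  tww (subst_graph G2 u) = maxn (tww G1) (tww G2).
Proof.
move=> hG2; have /card_gt0P [w0 _] := hG2.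
have hG1 : 0 < #|gV G1| by apply/card_gt0P; exists u.
have hS : 0 < #|gV (subst_graph G2 u)| by apply/card_gt0P; exists (inr w0).
have [d1 hd1] := tww_spec (dseq_ex hG1).
have [d2 hd2] := tww_spec (dseq_ex hG2).
have [dS hdS] := tww_spec (dseq_ex hS).
apply/eqP; rewrite eqn_leq; apply/andP; split.
  apply: hdS; apply: phase1.
    by apply: dseq_mono d1; rewrite leq_maxl.
  by apply: dseq_mono d2; rewrite leq_maxr.
rewrite geq_max; apply/andP; split.
  apply: hd1; apply: (restrict_dseq (f := phi u w0)) dS => //.
    exact: phi_adj.
  exact: phi_inj.
by apply: hd2; apply: (restrict_dseq (f := fun v => (inr v : gV (subst_graph G2 u)))) dS => //;
  move=> a b [].
Qed.
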